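(* Let $\mathcal X,\mathcal Y$ be finite-dimensional Hilbert spaces, let $K\subset\mathcal Y$ be a closed convex cone with polar cone $K^{\circ}$, and let $g:\mathcal X\to\mathcal Y$ be a continuous mapping such that the set-valued mapping $\mathcal F_g:x\mapsto K-g(x)$ is graph-convex. Then the function $$\theta(x)=\tfrac12\|\Pi_{K^{\circ}}(g(x))\|^2$$ is convex on $\mathcal X$.
   Context: $\Pi_{C}$ denotes the metric projection onto a closed convex set $C$, and $K^{\circ}=\{v\in\mathcal Y:\langle v,k\rangle\le 0\ \forall k\in K\}$. The mapping $\mathcal F_g:x\mapsto K-g(x)$ is called graph-convex if its graph $\{(x,y)\in\mathcal X\times\mathcal Y: g(x)+y\in K\}$ is a convex set. (One has $\theta(x)=\min_z\{\tfrac12\|z\|^2: g(x)+z\in K\}=\tfrac12\|g(x)-\Pi_K(g(x))\|^2$.) *)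

(* Defs.v *)
From HB Require Import structures.
From mathcomp Require Import all_boot all_order all_algebra.
From mathcomp Require Import all_classical all_reals all_analysis.
Set Implicit Arguments. Unset Strict Implicit. Unset Printing Implicit Defensive.
Import numFieldNormedType.Exports.
Import Order.TTheory GRing.Theory Num.Theory.
Local Open Scope classical_set_scope.
Local Open Scope ring_scope.

(* Finite-dimensional real Hilbert spaces are modelled as 'rV[R]_n with the
   standard Euclidean inner product. *)
Definition dotv (R : realType) (n : nat) (u v : 'rV[R]_n) : R := (u *m v^T) 0 0.
Definition enorm (R : realType) (n : nat) (u : 'rV[R]_n) : R := Num.sqrt (dotv u u).

Definition is_metric_proj (R : realType) (n : nat) (C : set 'rV[R]_n) (y p : 'rV[R]_n) :=
  C p /\ forall c, C c -> enorm (y - p) <= enorm (y - c).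

(* metric projection Pi_C(y) (well-defined, by uniqueness, for C closed convex nonempty) *)
Definition metric_proj (R : realType) (n : nat) (C : set 'rV[R]_n) (y : 'rV[R]_n) : 'rV[R]_n :=
  xget 0 [set p | is_metric_proj C y p].

Definition polar_cone (R : realType) (n : nat) (K : set 'rV[R]_n) : set 'rV[R]_n :=
  [set v | forall k, K k -> dotv v k <= 0].

Definition convex_set_in (R : realType) (V : lmodType R) (C : set V) :=
  forall x y (t : R), C x -> C y -> 0 <= t <= 1 -> C (t *: x + (1 - t) *: y).

Definition is_convex_cone (R : realType) (n : nat) (K : set 'rV[R]_n) :=
  K 0 /\ (forall (t : R) k, 0 <= t -> K k -> K (t *: k)) /\ convex_set_in K.

Definition convex_fun_on (R : realType) (n : nat) (f : 'rV[R]_n -> R) :=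
  forall x y (t : R), 0 <= t <= 1 ->
    f (t *: x + (1 - t) *: y) <= t * f x + (1 - t) * f y.

(* graph of F_g : x |-> K - g(x), as a subset of X * Y *)
Definition graph_Fg (R : realType) (n m : nat) (K : set 'rV[R]_m) (g : 'rV[R]_n -> 'rV[R]_m)
  : set ('rV[R]_n * 'rV[R]_m) := [set xy | K (g xy.1 + xy.2)].

(* Main.v *)
Require Import Defs.
From HB Require Import structures.
From mathcomp Require Import all_boot all_order all_algebra.
From mathcomp Require Import all_classical all_reals all_analysis.
From mathcomp Require Import ring lra.
Import numFieldNormedType.Exports.
Import Order.TTheory GRing.Theory Num.Theory.
Local Open Scope classical_set_scope.
Local Open Scope ring_scope.

Section Dot.
Variables (R : realType) (m : nat).
Implicit Types (u v w : 'rV[R]_m).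

Lemma dotvE u v : dotv u v = \sum_j u 0 j * v 0 j.
Proof. by rewrite /dotv !mxE; apply: eq_bigr => j _; rewrite mxE. Qed.

Lemma dotvC u v : dotv u v = dotv v u.
Proof. by rewrite !dotvE; apply: eq_bigr => j _; rewrite mulrC. Qed.

Lemma dotvDl u v w : dotv (u + v) w = dotv u w + dotv v w.
Proof. by rewrite /dotv mulmxDl mxE. Qed.

Lemma dotvZl (a : R) u v : dotv (a *: u) v = a * dotv u v.
Proof. by rewrite /dotv -scalemxAl mxE. Qed.

Lemma dotvNl u v : dotv (- u) v = - dotv u v.
Proof. by rewrite -scaleN1r dotvZl mulN1r. Qed.

Lemma dotvBl u v w : dotv (u - v) w = dotv u w - dotv v w.
Proof. by rewrite dotvDl dotvNl. Qed.

Lemma dotvDr u v w : dotv u (v + w) = dotv u v + dotv u w.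
Proof. by rewrite dotvC dotvDl !(dotvC u). Qed.

Lemma dotvZr (a : R) u v : dotv u (a *: v) = a * dotv u v.
Proof. by rewrite dotvC dotvZl dotvC. Qed.

Lemma dotvNr u v : dotv u (- v) = - dotv u v.
Proof. by rewrite dotvC dotvNl dotvC. Qed.

Lemma dotvBr u v w : dotv u (v - w) = dotv u v - dotv u w.
Proof. by rewrite dotvDr dotvNr. Qed.

Lemma dotv0l v : dotv 0 v = 0.
Proof. by rewrite /dotv mul0mx mxE. Qed.

Lemma dotv_ge0 u : 0 <= dotv u u.
Proof. by rewrite dotvE; apply: sumr_ge0 => j _; rewrite -expr2 sqr_ge0. Qed.

Lemma coord_le_dotv u j : u 0 j ^+ 2 <= dotv u u.
Proof.
rewrite dotvE (bigD1 j) //= expr2 lerDl.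
by apply: sumr_ge0 => i _; rewrite -expr2 sqr_ge0.
Qed.

Lemma enorm_sq u : enorm u ^+ 2 = dotv u u.
Proof. by rewrite /enorm sqr_sqrtr // dotv_ge0. Qed.

Lemma enorm_le u v : (enorm u <= enorm v) = (dotv u u <= dotv v v).
Proof. by rewrite /enorm ler_sqrt // dotv_ge0. Qed.


Lemma quad1 (a b : R) : 0 <= b -> (forall t, t <= 1 -> 0 <= 2 * t * a + t ^+ 2 * b) -> a = 0.
Proof.
move=> b0 H; apply/eqP; apply/negPn/negP => a0.
set d := b + `|a|.
have ap : 0 < `|a| by rewrite normr_gt0.
have d0 : 0 < d by rewrite /d; lra.
set t := - a / d.
have td : t * d = - a by rewrite /t mulrVK // unitfE gt_eqF.
have t1 : t <= 1.
  rewrite /t ler_pdivrMr // mul1r /d; have := ler_norm (- a); rewrite normrN; lra.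
have := H t t1 => Ht.
have Hd : 0 <= (2 * t * a + t ^+ 2 * b) * d ^+ 2 by apply: mulr_ge0 => //; rewrite sqr_ge0.
have E : (2 * t * a + t ^+ 2 * b) * d ^+ 2 = a ^+ 2 * (b - 2 * d).
  have -> : (2 * t * a + t ^+ 2 * b) * d ^+ 2 = 2 * (t * d) * a * d + (t * d) ^+ 2 * b by ring.
  rewrite td; rewrite /d; ring.
rewrite E in Hd.
have a2 : 0 < a ^+ 2 by rewrite -(real_normK (num_real a)) exprn_gt0.
have : b - 2 * d < 0 by rewrite /d; lra.
move=> bd; have : a ^+ 2 * (b - 2 * d) < 0 by rewrite pmulr_rlt0.
lra.
Qed.

Lemma quad2 (f b : R) : 0 <= b -> (forall s, 0 < s -> 2 * s * f <= s ^+ 2 * b) -> f <= 0.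
Proof.
move=> b0 H; rewrite leNgt; apply/negP => f0.
set s := f / (b + 1).
have b1 : 0 < b + 1 by lra.
have s0 : 0 < s by rewrite /s divr_gt0.
have sb : s * (b + 1) = f by rewrite /s mulrVK // unitfE gt_eqF.
have := H s s0 => Hs.
have : 2 * s * f <= s * (s * b) by rewrite mulrA -expr2.
have: s * b < s * (b + 1) by rewrite ltr_pM2l //; lra.
rewrite sb => h1 h2.
have : 2 * s * f <= s * f by apply: (le_trans h2); rewrite ler_pM2l // ltW.
have : 0 < s * f by rewrite mulr_gt0.
lra.
Qed.


Lemma dotv_expand u v (t : R) :
  dotv (u + t *: v) (u + t *: v) = dotv u u + 2 * t * dotv u v + t ^+ 2 * dotv v v.
Proof.
rewrite !dotvDl !dotvDr !dotvZl !dotvZr (dotvC v u); ring.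
Qed.

Lemma cone_add (C : set 'rV[R]_m) a b : is_convex_cone C -> C a -> C b -> C (a + b).
Proof.
move=> [C0 [Cs Cc]] Ca Cb.
have h2 : (0 : R) <= 2 by [].
have := Cc (2 *: a) (2 *: b) (2^-1) (Cs _ _ h2 Ca) (Cs _ _ h2 Cb).
have -> : (1 - 2^-1 : R) = 2^-1 by field.
rewrite !scalerA mulVf ?pnatr_eq0 // !scale1r; apply.
by rewrite invr_ge0 /= invf_le1 //; lra.
Qed.

Lemma proj_orth (C : set 'rV[R]_m) y q : is_convex_cone C -> C q ->
  (forall c, C c -> dotv (y - q) (y - q) <= dotv (y - c) (y - c)) ->
  dotv (y - q) q = 0 /\ (forall k, C k -> dotv (y - q) k <= 0).
Proof.
move=> hC Cq Hmin; have [C0 [Cs Cc]] := hC; split.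
  apply: (quad1 _ _ (dotv_ge0 q)) => t t1.
  have t0 : 0 <= 1 - t by rewrite subr_ge0.
  have := Hmin ((1 - t) *: q) (Cs _ _ t0 Cq).
  have -> : y - (1 - t) *: q = y - q + t *: q.
    by rewrite scalerBl scale1r opprB addrA addrAC.
  by rewrite dotv_expand -addrA lerDl.
move=> k Ck; apply: (quad2 _ _ (dotv_ge0 k)) => s s0.
have := Hmin (q + s *: k) (@cone_add C _ _ hC Cq (Cs _ _ (ltW s0) Ck)).
have -> : y - (q + s *: k) = y - q + (- s) *: k.
  by rewrite scaleNr opprD addrA.
rewrite dotv_expand sqrrN -addrA lerDl.
by rewrite mulrN mulNr addrC subr_ge0.
Qed.


Lemma abs_le_sq (a : R) : `|a| <= 1 + a ^+ 2.
Proof.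
rewrite -(real_normK (num_real a)); have := normr_ge0 a; set x := `|a|; nra.
Qed.

Lemma coord_abs_le u j : `|u 0 j| <= 1 + dotv u u.
Proof. by apply: (le_trans (abs_le_sq _)); rewrite lerD2l coord_le_dotv. Qed.

Lemma proj_exists (K : set 'rV[R]_m) y : closed K -> K 0 ->
  exists2 q, K q & forall k, K k -> dotv (y - q) (y - q) <= dotv (y - k) (y - k).
Proof.
move=> Kcl K0.
pose f := fun k : 'rV[R]_m => dotv (y - k) (y - k).
have fc : continuous f.
  have -> : f = \sum_(j < m) (fun k : 'rV[R]_m => (y - k) 0 j * (y - k) 0 j).
    rewrite fct_sumE; apply/funext => k; rewrite /f dotvE; by apply: eq_bigr.
  apply: (big_ind (fun h : 'rV[R]_m -> R => continuous h)).
  - by move=> x; apply: cst_continuous.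
  - by move=> g h gc hc x; exact: (continuousD (gc x) (hc x)).
  move=> j _.
  have cj : continuous (fun k : 'rV[R]_m => (y - k) 0 j).
    have -> : (fun k : 'rV[R]_m => (y - k) 0 j) = (fun k => y 0 j - k 0 j).
      by apply/funext => k; rewrite !mxE.
    move=> x.
    have h1 : {for x, continuous (fun _ : 'rV[R]_m => y 0 j)} by apply: cst_continuous.
    have h2 : {for x, continuous (fun k : 'rV[R]_m => k 0 j)} by apply: coord_continuous.
    exact: (continuousB h1 h2).
  by move=> x; exact: (continuousM (cj x) (cj x)).
pose A := K `&` [set k | f k <= f 0].
have A0 : A !=set0 by exists 0; split => //=.
have Acl : closed A.
  apply: closedI => //.
  by apply: (@closed_comp _ _ f [set x | x <= f 0]) => //; move=> x _; apply: fc.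
have Abd : bounded_set A.
  exists (2 + 2 * dotv y y); split; first exact: num_real.
  move=> M M0M k [Kk fk] /=.
  rewrite /Num.norm /= mx_normrE.
  elim/big_ind: _ => //.
  - by apply: le_trans (ltW M0M); have := dotv_ge0 y; lra.
  - by move=> a b ha hb; rewrite ge_max ha hb.
  move=> [i j] _ /=; rewrite (ord1 i).
  have -> : k 0 j = y 0 j - (y - k) 0 j by rewrite !mxE opprB addrC subrK.
  apply: (le_trans (ler_normB _ _)).
  have h1 := coord_abs_le y j.
  have h2 := coord_abs_le (y - k) j.
  have : f 0 = dotv y y by rewrite /f subr0.
  rewrite /f in fk *; move=> e; rewrite e in fk.
  move: fk => /= fk.
  apply: le_trans (ltW M0M); lra.
have Acp : compact A by apply: bounded_closed_compact.
have cf : {within A, continuous f} by apply: continuous_subspaceT.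
have [c cA cmin] := compact_EVT_min A0 Acp cf.
move: cA; rewrite inE => -[Kc fc0].
exists c => // k Kk.
have [fk|fk] := leP (f k) (f 0).
  by apply: (cmin k); rewrite inE.
by apply: (le_trans fc0); apply: ltW.
Qed.


Lemma subKK (u v : 'rV[R]_m) : u - (u - v) = v.
Proof. by rewrite opprB addrC subrK. Qed.

Lemma dotv_split u v : dotv (u + v) (u + v) = dotv u u + 2 * dotv u v + dotv v v.
Proof. by have := dotv_expand u v 1; rewrite scale1r mulr1 expr1n mul1r. Qed.

Lemma polar_cone_cone (K : set 'rV[R]_m) : is_convex_cone (polar_cone K).
Proof.
split; first by move=> k _; rewrite dotv0l.
split.
  by move=> t v t0 Pv k Kk; rewrite dotvZl mulr_ge0_le0 // Pv.
move=> a b t Pa Pb /andP[t0 t1] k Kk.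
rewrite dotvDl !dotvZl.
have ha := Pa k Kk; have hb := Pb k Kk.
have : 0 <= 1 - t by rewrite subr_ge0.
move=> t1'.
have : t * dotv a k <= 0 by rewrite mulr_ge0_le0.
have : (1 - t) * dotv b k <= 0 by rewrite mulr_ge0_le0.
lra.
Qed.

Lemma theta_eq (K : set 'rV[R]_m) y q : is_convex_cone K -> K q ->
  (forall k, K k -> dotv (y - q) (y - q) <= dotv (y - k) (y - k)) ->
  enorm (metric_proj (polar_cone K) y) ^+ 2 = dotv (y - q) (y - q).
Proof.
move=> hK Kq qmin.
have [Ho1 Hn1] := @proj_orth K y q hK Kq qmin.
set P := polar_cone K.
have Pr : P (y - q) by move=> k Kk; apply: Hn1.
have rmin : forall c, P c -> dotv q q <= dotv (y - c) (y - c).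
  move=> c Pc.
  have -> : y - c = q + ((y - q) - c) by rewrite addrA [q + _]addrC subrK.
  rewrite dotv_split dotvBr (dotvC q (y - q)) Ho1.
  have := Pc q Kq; rewrite dotvC => hc.
  have := dotv_ge0 (y - q - c); lra.
have ex : exists p, is_metric_proj P y p.
  exists (y - q); split => // c Pc; rewrite enorm_le.
  by rewrite subKK; apply: rmin.
have := xgetPex 0 ex; rewrite -/(metric_proj P y).
set p := metric_proj P y => -[Pp pmin].
have e1 : dotv (y - p) (y - p) <= dotv q q.
  by have := pmin _ Pr; rewrite enorm_le subKK.
have e2 := rmin p Pp.
have [Ho2 _] := @proj_orth P y p (polar_cone_cone K) Pp
  (fun c Pc => (ltac:(by rewrite -enorm_le; apply: pmin))).
rewrite enorm_sq.
have := dotv_split (y - p) p; rewrite subrK.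
have := dotv_split (y - q) q; rewrite subrK.
lra.
Qed.

End Dot.

Theorem proposition2p1 (R : realType) (n m : nat) (K : set 'rV[R]_m)
    (g : 'rV[R]_n -> 'rV[R]_m) :
  closed K -> is_convex_cone K -> continuous g ->
  convex_set_in (graph_Fg K g) ->
  convex_fun_on (fun x => 2^-1 * enorm (metric_proj (polar_cone K) (g x)) ^+ 2).
Proof.
move=> Kcl hK gc Gc x1 x2 t t01.
have K0 : K 0 by case: hK.
have [q1 Kq1 m1] := @proj_exists _ _ K (g x1) Kcl K0.
have [q2 Kq2 m2] := @proj_exists _ _ K (g x2) Kcl K0.
set x := t *: x1 + (1 - t) *: x2.
have [q Kq mq] := @proj_exists _ _ K (g x) Kcl K0.
rewrite /= (@theta_eq _ _ K (g x1) q1 hK Kq1 m1) (@theta_eq _ _ K (g x2) q2 hK Kq2 m2).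
rewrite (@theta_eq _ _ K (g x) q hK Kq mq).
set z1 := q1 - g x1; set z2 := q2 - g x2.
have G1 : graph_Fg K g (x1, z1) by rewrite /graph_Fg /= /z1 addrC subrK.
have G2 : graph_Fg K g (x2, z2) by rewrite /graph_Fg /= /z2 addrC subrK.
have := Gc _ _ _ G1 G2 t01; rewrite /graph_Fg /= -/x.
set z := t *: z1 + (1 - t) *: z2 => Kz.
have h1 := mq _ Kz.
rewrite opprD addrA subrr add0r dotvNl dotvNr opprK in h1.
have e1 : dotv (g x1 - q1) (g x1 - q1) = dotv z1 z1.
  by rewrite /z1 -opprB dotvNl dotvNr opprK.
have e2 : dotv (g x2 - q2) (g x2 - q2) = dotv z2 z2.
  by rewrite /z2 -opprB dotvNl dotvNr opprK.
rewrite e1 e2; clearbody z1 z2.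
have t0 : 0 <= t by case/andP: t01.
have t1 : 0 <= 1 - t by case/andP: t01 => _; rewrite subr_ge0.
have hz : t * dotv z1 z1 + (1 - t) * dotv z2 z2 - dotv z z
    = t * (1 - t) * dotv (z1 - z2) (z1 - z2).
  rewrite /z !dotvDl !dotvDr !dotvZl !dotvZr ?dotvNl ?dotvNr ?(dotvC _ _ z2 z1); ring.
have hp : 0 <= t * (1 - t) * dotv (z1 - z2) (z1 - z2).
  by rewrite mulr_ge0 ?dotv_ge0 // mulr_ge0.
have hzz : dotv z z <= t * dotv z1 z1 + (1 - t) * dotv z2 z2.
  by rewrite -subr_ge0 hz.
have -> : t * (2^-1 * dotv z1 z1) + (1 - t) * (2^-1 * dotv z2 z2)
    = 2^-1 * (t * dotv z1 z1 + (1 - t) * dotv z2 z2) by ring.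
rewrite ler_pM2l ?invr_gt0 //.
exact: le_trans h1 hzz.
Qed.
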